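(* Let $M$ be a finite set. For any $\bar{\mathcal{F}}\subseteq\{f:M\to\mathbb{R}\}$ there exists a finite $\mathcal{F}\subseteq\{f:M\to\mathbb{R}\}$ such that $q(M,\eta,\mathcal{F})=q(M,\eta,\bar{\mathcal{F}})$ for every $\eta\in\Delta M$.
   Context: For $\eta\in\Delta M$ and $\mathcal{F}\subseteq\{f:M\to\mathbb{R}\}$, $q(M,\eta,\mathcal{F})$ denotes the unique maximizer of the Shannon entropy $-\sum_mq_m\log q_m$ (with $0\log0=0$) over $\{q\in\Delta M:\sum_mq_mf(m)=\sum_m\eta_mf(m)\ \forall f\in\mathcal{F}\}$. *)

(* Defs.v *)
From Stdlib Require Import ClassicalEpsilon.
From mathcomp Require Import all_boot all_order all_algebra.
From mathcomp Require Import all_classical all_reals all_analysis.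
Set Implicit Arguments. Unset Strict Implicit. Unset Printing Implicit Defensive.
Import Order.TTheory GRing.Theory Num.Theory.
Local Open Scope classical_set_scope.
Local Open Scope ring_scope.

Section MaxEnt.
Variables (R : realType) (M : finType).

Definition simplex : set (M -> R) :=
  [set q | (forall m, 0 <= q m) /\ \sum_(m : M) q m = 1].

Definition entropy (q : M -> R) : R :=
  - \sum_(m : M) (if q m == 0 then 0 else q m * ln (q m)).

Definition feasible (eta : M -> R) (F : set (M -> R)) : set (M -> R) :=
  [set q | simplex q /\
     forall f, F f -> \sum_(m : M) q m * f m = \sum_(m : M) eta m * f m].

Definition is_maxent (eta : M -> R) (F : set (M -> R)) (q : M -> R) : Prop :=
  feasible eta F q /\ forall q', feasible eta F q' -> entropy q' <= entropy q.

(* q(M, eta, F): the (unique) entropy maximizer, chosen by Hilbert's epsilon *)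
Definition maxent_q (eta : M -> R) (F : set (M -> R)) : M -> R :=
  epsilon (inhabits (fun _ : M => 0 : R)) (is_maxent eta F).

End MaxEnt.

(* Main.v *)
Require Import Defs.
From mathcomp Require Import all_boot all_order all_algebra.
From mathcomp Require Import all_classical all_reals all_analysis.
From Stdlib Require Import ClassicalEpsilon.
From mathcomp Require Import zify.
Set Implicit Arguments. Unset Strict Implicit. Unset Printing Implicit Defensive.
Import Order.TTheory GRing.Theory Num.Theory.
Local Open Scope classical_set_scope.
Local Open Scope ring_scope.

Section Aux.
Variables (R : realType) (M : finType).

Definition rv (f : M -> R) : 'rV[R]_#|M| := \row_i f (enum_val i).
Definition Lf (v : M -> R) (x : 'rV[R]_#|M|) : R :=
  \sum_i v (enum_val i) * x 0 i.

Lemma ipE (v f : M -> R) : \sum_m v m * f m = Lf v (rv f).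
Proof.
rewrite /Lf (big_enum_val (fun m => v m * f m)) /=.
by apply: eq_bigr => i _; rewrite mxE.
Qed.

Lemma Lf_sum v k (c : 'I_k -> R) (X : 'I_k -> 'rV[R]_#|M|) :
  Lf v (\sum_i c i *: X i) = \sum_i c i * Lf v (X i).
Proof.
rewrite /Lf.
under eq_bigr do rewrite summxE big_distrr.
rewrite exchange_big /=; apply: eq_bigr => i _.
rewrite big_distrr; apply: eq_bigr => j _.
by rewrite mxE mulrCA.
Qed.

Lemma Lf_span v (X : seq 'rV[R]_#|M|) :
  (forall x, x \in X -> Lf v x = 0) ->
  forall y, y \in <<X>>%VS -> Lf v y = 0.
Proof.
move=> H y; rewrite -{1}(in_tupleE X) => /coord_span ->.
rewrite Lf_sum big1 // => i _.
by rewrite H ?mulr0 // mem_nth // size_tuple.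
Qed.

Lemma in_map_rv (s : seq (M -> R)) x :
  x \in map rv s -> exists g, List.In g s /\ x = rv g.
Proof.
elim: s => [|g s IH] //=; rewrite in_cons => /orP [/eqP ->|/IH [h [Hh ->]]].
  by exists g; split => //; left.
by exists h; split => //; right.
Qed.

Lemma dim_le (U : {vspace 'rV[R]_#|M|}) : (\dim U <= #|M|)%N.
Proof.
by have := dimvS (subvf U); rewrite dimvf /= /dim /= mul1n.
Qed.

Lemma good_exists (Fbar : set (M -> R)) : forall k s,
  (forall g, List.In g s -> Fbar g) ->
  (#|M| - \dim <<map rv s>> <= k)%N ->
  exists s', (forall g, List.In g s' -> Fbar g) /\
    forall f, Fbar f -> rv f \in <<map rv s'>>%VS.
Proof.
elim=> [|k IH] s Hs Hk.
- case: (pselect (forall f, Fbar f -> rv f \in <<map rv s>>%VS)) => Hg.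
    by exists s.
  exfalso; move: Hg => /existsNP [f /not_implyP [Hf Hn]].
  have Hsub : (<<map rv s>> <= <<map rv (f :: s)>>)%VS.
    by rewrite /= span_cons addvSr.
  have := dimv_leqif_sup Hsub => Hle.
  have Hneq : ~~ (<<map rv (f :: s)>> <= <<map rv s>>)%VS.
    apply/negP => Hs2; apply: Hn; apply: (subvP Hs2).
    by apply: memv_span; rewrite /= mem_head.
  have := dim_le <<map rv (f :: s)>>.
  move: Hle Hneq Hk; case=> Hl <-. move: Hl; rewrite leq_eqVlt => /orP [->//|Hlt] _.
  rewrite leqn0 subn_eq0 => H1 H2.
  have := leq_trans Hlt H2; by rewrite ltnNge H1.
- case: (pselect (forall f, Fbar f -> rv f \in <<map rv s>>%VS)) => Hg.
    by exists s.
  move: Hg => /existsNP [f /not_implyP [Hf Hn]].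
  apply: (IH (f :: s)).
    by move=> g /= [<-|]; [|apply: Hs].
  have Hsub : (<<map rv s>> <= <<map rv (f :: s)>>)%VS.
    by rewrite /= span_cons addvSr.
  have := dimv_leqif_sup Hsub => Hle.
  have Hneq : ~~ (<<map rv (f :: s)>> <= <<map rv s>>)%VS.
    apply/negP => Hs2; apply: Hn; apply: (subvP Hs2).
    by apply: memv_span; rewrite /= mem_head.
  have Hd := dim_le <<map rv (f :: s)>>.
  move: Hle Hneq; case=> Hl <-. move: Hl; rewrite leq_eqVlt => /orP [->//|Hlt] _.
  move: Hk Hlt Hd; set a := \dim _; set b := \dim _ => Hk Hlt Hd.
  lia.
Qed.

Lemma finite_In (s : seq (M -> R)) : finite_set (fun f => List.In f s).
Proof.
elim: s => [|g s IH] /=.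
  suff -> : (fun f : M -> R => False) = set0 by [].
  by apply/funext => f; apply/propext.
suff -> : (fun f => g = f \/ List.In f s) = [set g] `|` (fun f => List.In f s).
  by rewrite finite_setU; split => //; apply: finite_set1.
apply/funext => f; apply/propext; split => [[->|H]|[H|H]]; by [left|right|left|right].
Qed.

End Aux.

Theorem lemma3 (R : realType) (M : finType) (Fbar : set (M -> R)) :
  exists F : set (M -> R), finite_set F /\
    forall eta : M -> R, simplex eta -> maxent_q eta F = maxent_q eta Fbar.
Proof.
have [s [Hs Hg]] := @good_exists R M Fbar #|M| [::] (fun g (H : List.In g [::]) => match H with end) (leq_subr _ _).
exists (fun f => List.In f s); split; first exact: finite_In.
move=> eta _.
suff Hf : feasible eta (fun f => List.In f s) = feasible eta Fbar.
  by rewrite /maxent_q /is_maxent Hf.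
apply/funext => q; apply/propext; split => -[Hq H]; split => // f Hf.
- apply/eqP; rewrite -subr_eq0; apply/eqP.
  rewrite -sumrB.
  under eq_bigr do rewrite -mulrBl.
  rewrite (ipE (fun m => q m - eta m)).
  apply: Lf_span (Hg f Hf) => x /in_map_rv [g [Hgs ->]].
  rewrite -ipE.
  under eq_bigr do rewrite mulrBl.
  by rewrite sumrB H // subrr.
- by apply: H; apply: Hs.
Qed.
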